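(* Let $n\in\{1,3,7\}$ and let $m:\mathbb{S}^n\times\mathbb{S}^n\to\mathbb{S}^n$ be the multiplication map of unit complex numbers, quaternions or octonions respectively. Then $L_m(\mathbb{S}^n\times\mathbb{S}^n)=\sqrt{2}$.
   Context: $\mathbb{S}^n$ is the unit round sphere and $\mathbb{S}^n\times\mathbb{S}^n$ has the product Riemannian metric with its geodesic distance. $L_g(M)$ denotes the Lipschitz constant of a map $g$ on $M$, i.e. the smallest $C$ with $d(g(a),g(b))\le C\,d(a,b)$ for all $a,b\in M$. *)

(* Defs.v *)
From Stdlib Require Import Reals.
Open Scope R_scope.

(* Cayley--Dickson algebras: CD 0 = R, CD (k+1) = CD k * CD k.
   CD 1 = complex numbers, CD 2 = quaternions, CD 3 = octonions,
   each identified with R^(2^k) with its Euclidean structure. *)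
Fixpoint CD (k : nat) : Type :=
  match k with O => R | S k => (CD k * CD k)%type end.

Fixpoint cd_add (k : nat) : CD k -> CD k -> CD k :=
  match k return CD k -> CD k -> CD k with
  | O => Rplus
  | S k => fun x y => (cd_add k (fst x) (fst y), cd_add k (snd x) (snd y))
  end.

Fixpoint cd_opp (k : nat) : CD k -> CD k :=
  match k return CD k -> CD k with
  | O => Ropp
  | S k => fun x => (cd_opp k (fst x), cd_opp k (snd x))
  end.

Fixpoint cd_conj (k : nat) : CD k -> CD k :=
  match k return CD k -> CD k with
  | O => fun x => x
  | S k => fun x => (cd_conj k (fst x), cd_opp k (snd x))
  end.

(* (a,b)(c,d) = (ac - conj(d) b, d a + b conj(c))  (Cayley--Dickson doubling) *)
Fixpoint cd_mul (k : nat) : CD k -> CD k -> CD k :=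
  match k return CD k -> CD k -> CD k with
  | O => Rmult
  | S k => fun x y =>
      let a := fst x in let b := snd x in let c := fst y in let d := snd y in
      (cd_add k (cd_mul k a c) (cd_opp k (cd_mul k (cd_conj k d) b)),
       cd_add k (cd_mul k d a) (cd_mul k b (cd_conj k c)))
  end.

Fixpoint cd_inner (k : nat) : CD k -> CD k -> R :=
  match k return CD k -> CD k -> R with
  | O => Rmult
  | S k => fun x y => cd_inner k (fst x) (fst y) + cd_inner k (snd x) (snd y)
  end.

(* The algebra whose unit sphere is S^n: R^(n+1) = CD (log2 (n+1));
   for n = 1, 3, 7 this is C, H, O respectively. *)
Definition alg (n : nat) : Type := CD (Nat.log2 (S n)).
Definition alg_mul (n : nat) : alg n -> alg n -> alg n := cd_mul (Nat.log2 (S n)).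
Definition alg_inner (n : nat) : alg n -> alg n -> R := cd_inner (Nat.log2 (S n)).

Definition sphere (n : nat) := { x : alg n | alg_inner n x x = 1 }.

Definition sph_dist (n : nat) (x y : sphere n) : R :=
  acos (alg_inner n (proj1_sig x) (proj1_sig y)).

(* geodesic distance of the product Riemannian metric on S^n x S^n *)
Definition prod_dist (n : nat) (p q : sphere n * sphere n) : R :=
  sqrt (sph_dist n (fst p) (fst q) ^ 2 + sph_dist n (snd p) (snd q) ^ 2).

(* restriction of the algebra multiplication to S^n x S^n -> S^n
   (well-defined since C, H, O are normed algebras; the codomain is
    taken as the ambient algebra and distance measured as in S^n) *)
Definition sph_mul (n : nat) (p : sphere n * sphere n) : alg n :=
  alg_mul n (proj1_sig (fst p)) (proj1_sig (snd p)).

Definition lip_bound (n : nat) (C : R) : Prop :=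
  forall p q : sphere n * sphere n,
    acos (alg_inner n (sph_mul n p) (sph_mul n q)) <= C * prod_dist n p q.

Definition is_lipschitz_constant (n : nat) (L : R) : Prop :=
  lip_bound n L /\ forall C, lip_bound n C -> L <= C.

(* Main.v *)
Require Import Defs.
From Stdlib Require Import Reals Lra Psatz.
Open Scope R_scope.

Ltac d3 x := let a := fresh in let b := fresh in let c := fresh in let d := fresh in
  let e := fresh in let f := fresh in let g := fresh in let h := fresh in
  destruct x as [[[a b] [c d]] [[e f] [g h]]].
Ltac d2 x := let a := fresh in let b := fresh in let c := fresh in let d := fresh in
  destruct x as [[a b] [c d]].
Ltac d1 x := let a := fresh in let b := fresh in destruct x as [a b].

Fixpoint cd_scale (k : nat) (s : R) : CD k -> CD k :=
  match k return CD k -> CD k with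
  | O => fun x => s * x
  | S k => fun x => (cd_scale k s (fst x), cd_scale k s (snd x))
  end.

Lemma inner_sym k (x y : CD k) : cd_inner k x y = cd_inner k y x.
Proof. induction k; simpl; [ring|]. rewrite IHk, (IHk (snd x)). reflexivity. Qed.

Lemma inner_add_l k (x y z : CD k) :
  cd_inner k (cd_add k x y) z = cd_inner k x z + cd_inner k y z.
Proof. induction k; simpl; [ring|]. rewrite !IHk. ring. Qed.

Lemma inner_scale_l k s (x y : CD k) :
  cd_inner k (cd_scale k s x) y = s * cd_inner k x y.
Proof. induction k; simpl; [ring|]. rewrite !IHk. ring. Qed.

Lemma inner_pos k (x : CD k) : 0 <= cd_inner k x x.
Proof. induction k; simpl; [nra|]. specialize (IHk (fst x)) as H1.
  specialize (IHk (snd x)). lra. Qed.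

Lemma cs_aux A B a a' b b' : 0 <= a -> 0 <= a' -> 0 <= b -> 0 <= b' ->
  A * A <= a * a' -> B * B <= b * b' -> (A + B) * (A + B) <= (a + b) * (a' + b').
Proof.
intros.
assert (H5 : (2*A*B)*(2*A*B) <= (a*b' + a'*b)*(a*b'+a'*b)).
{ assert ((A*A)*(B*B) <= (a*a')*(b*b')).
  { apply Rmult_le_compat; try assumption; apply Rle_0_sqr. }
  pose proof (Rle_0_sqr (a*b' - a'*b)). unfold Rsqr in *. nra. }
assert (2*A*B <= a*b'+a'*b).
{ destruct (Rle_or_lt (2*A*B) 0); [nra|].
  assert (0 <= a*b') by (apply Rmult_le_pos; auto).
  assert (0 <= a'*b) by (apply Rmult_le_pos; auto).
  destruct (Rle_or_lt (2*A*B) (a*b'+a'*b)); [auto|nra]. }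
nra.
Qed.

Lemma cs k (x y : CD k) : cd_inner k x y * cd_inner k x y <= cd_inner k x x * cd_inner k y y.
Proof.
induction k; simpl; [nra|].
apply cs_aux; try apply inner_pos; apply IHk.
Qed.

Lemma acos_le_of r g : -1 <= r <= 1 -> 0 <= g <= PI -> cos g <= r -> acos r <= g.
Proof.
intros Hr Hg Hc. destruct (Rle_or_lt (acos r) g) as [H|H]; auto.
pose proof (acos_bound r).
pose proof (cos_decreasing_1 g (acos r) ltac:(lra) ltac:(lra) ltac:(lra) ltac:(lra) H).
rewrite cos_acos in H1 by lra. lra.
Qed.

Lemma sph_tri k (a b c : CD k) :
  cd_inner k a a = 1 -> cd_inner k b b = 1 -> cd_inner k c c = 1 ->
  acos (cd_inner k a c) <= acos (cd_inner k a b) + acos (cd_inner k b c).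
Proof.
intros Ha Hb Hc.
set (p := cd_inner k a b). set (q := cd_inner k b c). set (r := cd_inner k a c).
assert (Hp : -1 <= p <= 1) by (pose proof (cs k a b); rewrite Ha, Hb in H; fold p in H; nra).
assert (Hq : -1 <= q <= 1) by (pose proof (cs k b c); rewrite Hc, Hb in H; fold q in H; nra).
assert (Hr : -1 <= r <= 1) by (pose proof (cs k a c); rewrite Ha, Hc in H; fold r in H; nra).
set (u := cd_add k a (cd_scale k (- p) b)).
set (v := cd_add k c (cd_scale k (- q) b)).
assert (Huv : cd_inner k u v = r - p * q).
{ unfold u, v. rewrite !inner_add_l, !inner_scale_l.
  rewrite (inner_sym k a), (inner_sym k b (cd_add _ _ _)), !inner_add_l, !inner_scale_l.
  rewrite (inner_sym k c a), (inner_sym k b a), (inner_sym k c b), Hb. unfold p, q, r. ring. }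
assert (Huu : cd_inner k u u = 1 - p * p).
{ unfold u. rewrite !inner_add_l, !inner_scale_l.
  rewrite (inner_sym k a), (inner_sym k b (cd_add _ _ _)), !inner_add_l, !inner_scale_l.
  rewrite Ha, Hb, (inner_sym k b a). unfold p. ring. }
assert (Hvv : cd_inner k v v = 1 - q * q).
{ unfold v. rewrite !inner_add_l, !inner_scale_l.
  rewrite (inner_sym k c), (inner_sym k b (cd_add _ _ _)), !inner_add_l, !inner_scale_l.
  rewrite (inner_sym k c b), Hc, Hb. unfold q. ring. }
pose proof (cs k u v) as CS. rewrite Huv, Huu, Hvv in CS.
pose proof (acos_bound p). pose proof (acos_bound q). pose proof (acos_bound r).
destruct (Rle_or_lt PI (acos p + acos q)) as [Hbig|Hsm]; [lra|].
apply acos_le_of; [lra|lra|].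
rewrite cos_plus, !cos_acos by lra. rewrite !sin_acos by lra.
assert (S1 : 0 <= 1 - p²) by (unfold Rsqr; nra).
assert (S2 : 0 <= 1 - q²) by (unfold Rsqr; nra).
pose proof (sqrt_pos (1 - p²)). pose proof (sqrt_pos (1 - q²)).
pose proof (sqrt_sqrt _ S1). pose proof (sqrt_sqrt _ S2).
unfold Rsqr in *.
set (sp := sqrt (1 - p*p)) in *. set (sq := sqrt (1 - q*q)) in *.
clearbody sp sq u v p q r.
assert (E : (r - p*q)*(r-p*q) <= (sp*sq)*(sp*sq)).
{ replace ((sp*sq)*(sp*sq)) with ((sp*sp)*(sq*sq)) by ring. rewrite H4, H5. exact CS. }
assert (0 <= sp*sq) by (apply Rmult_le_pos; auto).
destruct (Rle_or_lt (p*q - sp*sq) r); [auto|nra].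
Qed.

Lemma sum_le_sqrt2 a b : 0 <= a -> 0 <= b -> a + b <= sqrt 2 * sqrt (a ^ 2 + b ^ 2).
Proof.
intros. pose proof (pow2_ge_0 a). pose proof (pow2_ge_0 b).
rewrite <- sqrt_mult by lra.
apply Rle_trans with (sqrt ((a+b)*(a+b))).
{ rewrite sqrt_square; lra. }
apply sqrt_le_1_alt. simpl. pose proof (Rle_0_sqr (a-b)). unfold Rsqr in *. nra.
Qed.

Lemma upper k
  (HR : forall x y z : CD k, cd_inner k (cd_mul k x z) (cd_mul k y z) = cd_inner k x y * cd_inner k z z)
  (HL : forall x y z : CD k, cd_inner k (cd_mul k x y) (cd_mul k x z) = cd_inner k x x * cd_inner k y z)
  (x x' y y' : CD k) :
  cd_inner k x x = 1 -> cd_inner k x' x' = 1 -> cd_inner k y y = 1 -> cd_inner k y' y' = 1 ->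
  acos (cd_inner k (cd_mul k x y) (cd_mul k x' y'))
    <= sqrt 2 * sqrt (acos (cd_inner k x x') ^ 2 + acos (cd_inner k y y') ^ 2).
Proof.
intros Hx Hx' Hy Hy'.
eapply Rle_trans; [apply (sph_tri k _ (cd_mul k x' y))|].
- rewrite HR, Hx, Hy; ring.
- rewrite HR, Hx', Hy; ring.
- rewrite HR, Hx', Hy'; ring.
- rewrite HR, Hy, Rmult_1_r, HL, Hx', Rmult_1_l.
  apply sum_le_sqrt2; apply acos_bound.
Qed.

Lemma comp1r (x y z : CD 1) : cd_inner 1 (cd_mul 1 x z) (cd_mul 1 y z) = cd_inner 1 x y * cd_inner 1 z z.
Proof. d1 x; d1 y; d1 z; simpl; ring. Qed.
Lemma comp1l (x y z : CD 1) : cd_inner 1 (cd_mul 1 x y) (cd_mul 1 x z) = cd_inner 1 x x * cd_inner 1 y z.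
Proof. d1 x; d1 y; d1 z; simpl; ring. Qed.
Lemma comp2r (x y z : CD 2) : cd_inner 2 (cd_mul 2 x z) (cd_mul 2 y z) = cd_inner 2 x y * cd_inner 2 z z.
Proof. d2 x; d2 y; d2 z; simpl; ring. Qed.
Lemma comp2l (x y z : CD 2) : cd_inner 2 (cd_mul 2 x y) (cd_mul 2 x z) = cd_inner 2 x x * cd_inner 2 y z.
Proof. d2 x; d2 y; d2 z; simpl; ring. Qed.
Lemma comp3r (x y z : CD 3) : cd_inner 3 (cd_mul 3 x z) (cd_mul 3 y z) = cd_inner 3 x y * cd_inner 3 z z.
Proof. d3 x; d3 y; d3 z; simpl; ring. Qed.
Lemma comp3l (x y z : CD 3) : cd_inner 3 (cd_mul 3 x y) (cd_mul 3 x z) = cd_inner 3 x x * cd_inner 3 y z.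
Proof. d3 x; d3 y; d3 z; simpl; ring. Qed.

Lemma lip_upper n k (Hk : Nat.log2 (S n) = k)
  (HR : forall x y z : CD k, cd_inner k (cd_mul k x z) (cd_mul k y z) = cd_inner k x y * cd_inner k z z)
  (HL : forall x y z : CD k, cd_inner k (cd_mul k x y) (cd_mul k x z) = cd_inner k x x * cd_inner k y z) :
  lip_bound n (sqrt 2).
Proof.
intros [[x Hx] [y Hy]] [[x' Hx'] [y' Hy']].
unfold sph_mul, prod_dist, sph_dist, alg_inner, alg_mul, alg in *; simpl.
revert x y x' y' Hx Hy Hx' Hy'. rewrite Hk. intros.
apply upper; auto.
Qed.

Lemma lower_from C : PI / 2 <= C * sqrt ((PI/4) ^ 2 + (PI/4) ^ 2) -> sqrt 2 <= C.
Proof.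
intros H.
replace ((PI/4)^2 + (PI/4)^2) with (2 * (PI/4)^2) in H by ring.
rewrite sqrt_mult, sqrt_pow2 in H by (pose proof PI_RGT_0; nra).
pose proof PI_RGT_0. pose proof (sqrt_sqrt 2 ltac:(lra)).
pose proof (sqrt_lt_R0 2 ltac:(lra)).
set (s := sqrt 2) in *.
assert (A : (PI/4) * (C*s - 2) >= 0) by lra.
assert (B : C*s - 2 >= 0).
{ destruct (Rle_or_lt 0 (C*s-2)); [lra|]. assert (0 < PI/4) by lra. nra. }
nra.
Qed.

Lemma inv_sqrt2_sq : / sqrt 2 * / sqrt 2 = 1/2.
Proof. rewrite <- Rinv_mult, sqrt_sqrt by lra. lra. Qed.

Lemma lip_lower n (C : R) (one z : alg n)
  (H1 : alg_inner n one one = 1) (H2 : alg_inner n z z = 1)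
  (H3 : alg_inner n one z = / sqrt 2)
  (H4 : alg_inner n (alg_mul n one one) (alg_mul n z z) = 0) :
  lip_bound n C -> sqrt 2 <= C.
Proof.
intros HL. apply lower_from.
specialize (HL (exist _ one H1, exist _ one H1) (exist _ z H2, exist _ z H2)).
unfold sph_mul, prod_dist, sph_dist in HL.
simpl in HL. rewrite H3, H4, acos_0, acos_inv_sqrt2 in HL. exact HL.
Qed.

Theorem proposition3 (n : nat) (hn : (n = 1 \/ n = 3 \/ n = 7)%nat) :
  is_lipschitz_constant n (sqrt 2).
Proof.
pose proof inv_sqrt2_sq as Q.
destruct hn as [-> | [-> | ->]]; split.
- apply (lip_upper 1 1 eq_refl comp1r comp1l).
- intros C. apply (lip_lower 1 C (1,0) (/ sqrt 2, / sqrt 2)); unfold alg_inner, alg_mul; simpl; set (t := / sqrt 2) in *; nra.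
- apply (lip_upper 3 2 eq_refl comp2r comp2l).
- intros C. apply (lip_lower 3 C ((1,0),(0,0)) ((/ sqrt 2, / sqrt 2),(0,0))); unfold alg_inner, alg_mul; simpl; set (t := / sqrt 2) in *; nra.
- apply (lip_upper 7 3 eq_refl comp3r comp3l).
- intros C. apply (lip_lower 7 C (((1,0),(0,0)),((0,0),(0,0))) (((/ sqrt 2, / sqrt 2),(0,0)),((0,0),(0,0)))); unfold alg_inner, alg_mul; simpl; set (t := / sqrt 2) in *; nra.
Qed.
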